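(* Let $N, s \in \mathbb{N}$ with $\gcd(N, s) = 1$, let $s'$ be the unique integer in $[1,N-1]$ with $s s'\equiv 1 \pmod N$, let $H<P$ be natural numbers, let $\tilde{P}$ be the unique integer in $[0,s-1]$ with $\tilde P\equiv P \pmod s$, and let $g(x)=x+c\in\mathbb{Z}[x]$ where $c$ is the unique integer in $[0,N-1]$ congruent to $s' + s'(P - \tilde{P})$ modulo $N$. Let $r,m,d \in \mathbb{N}$ be arbitrary, and define $f_0, \dots, f_{d-1} \in \mathbb{Z}[x]$ by \[ f_i(x) = \begin{cases} N^{m - \lfloor i/r \rfloor}g(x)^i, & 0 \le i < rm, \\ g(x)^i, & rm \le i < d. \end{cases} \] Let $p_0 \in [P-H, P+H]$ be an integer with $p_0>1$, $p_0^r\mid N$ and $p_0\equiv 1 \pmod s$; write $p_0=sx_0+1$ and let $x' = x_0 - \frac{P - \tilde{P}}{s}$. Then $p_0^{rm} \mid f_i(x')$ for all $0 \leq i < d$. *)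

(* Defs.v *)
From mathcomp Require Import all_boot all_order all_algebra.
Set Implicit Arguments. Unset Strict Implicit. Unset Printing Implicit Defensive.
Import Order.TTheory GRing.Theory Num.Theory.
Local Open Scope ring_scope.

Definition gpoly (c : int) : {poly int} := 'X + c%:P.

Definition fpoly (N r m : nat) (c : int) (i : nat) : {poly int} :=
  if (i < r * m)%N then ((N ^ (m - i %/ r)%N)%:Z)%:P * gpoly c ^+ i
  else gpoly c ^+ i.

(* Main.v *)
Require Import Defs.
From mathcomp Require Import all_boot all_order all_algebra.
From mathcomp Require Import ring lra zify.
Import Order.TTheory GRing.Theory Num.Theory.
Local Open Scope ring_scope.

Lemma aux_le (a b i : nat) : (a <= i)%N -> (a <= b)%N -> (b <= b - a + i)%N.
Proof. lia. Qed.

Theorem claim3p4 (N s : nat) (s' : int) (H P : nat) (Pt c : int)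
    (r m d : nat) (p0 x0 : int) :
  coprime N s ->
  1 <= s' <= N%:Z - 1 -> (s%:Z * s' == 1 %[mod N%:Z])%Z ->
  (H < P)%N ->
  0 <= Pt <= s%:Z - 1 -> (Pt == P%:Z %[mod s%:Z])%Z ->
  0 <= c <= N%:Z - 1 -> (c == s' + s' * (P%:Z - Pt) %[mod N%:Z])%Z ->
  P%:Z - H%:Z <= p0 <= P%:Z + H%:Z -> 1 < p0 ->
  (p0 ^+ r %| N%:Z)%Z -> (p0 == 1 %[mod s%:Z])%Z ->
  p0 = s%:Z * x0 + 1 ->
  forall i : nat, (i < d)%N ->
    (p0 ^+ (r * m) %| (fpoly N r m c i).[x0 - ((P%:Z - Pt) %/ s%:Z)%Z])%Z.
Proof.
move=> _ _ hs' _ _ hPt _ hc _ _ hN _ hp0 i _.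
have [r0|rpos] := posnP r.
  by rewrite r0 mul0n expr0 dvd1z.
set k := ((P%:Z - Pt) %/ s%:Z)%Z.
have ek : k * s%:Z = P%:Z - Pt.
  apply: divzK; rewrite eqz_mod_dvd in hPt.
  by rewrite -opprB rpredN.
rewrite eqz_mod_dvd in hs'; case/dvdzP: hs' => j ej.
rewrite eqz_mod_dvd in hc; case/dvdzP: hc => k2 ek2.
case/dvdzP: hN => t et.
set g := x0 - k + c.
set w := j * (1 + (P%:Z - Pt)) + s%:Z * k2.
have sg : s%:Z * g = p0 + w * N%:Z.
  apply/eqP; rewrite -subr_eq0; apply/eqP; rewrite /g.
  have -> : c = s' + s' * (P%:Z - Pt) + k2 * N%:Z by rewrite -ek2; ring.
  rewrite /g /w -ek hp0.
  transitivity ((s%:Z * s' - 1 - j * N%:Z) * (1 + k * s%:Z)); first by ring.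
  by rewrite ej; ring.
have e6 : p0 ^+ r = p0 * p0 ^+ r.-1 by rewrite -exprS prednK.
have pg : (p0 %| g)%Z.
  apply/dvdzP; exists (g - x0 - x0 * w * t * p0 ^+ r.-1).
  have e1 : g = g * p0 - x0 * (s%:Z * g) by rewrite hp0; ring.
  rewrite {1}e1 sg et e6; ring.
have geval : forall n, (gpoly c ^+ n).[x0 - k] = g ^+ n.
  by move=> n; rewrite /gpoly !hornerE.
rewrite /fpoly; case: ifP => hi.
  rewrite hornerCM geval.
  have hq : (i %/ r <= m)%N.
    by apply: ltnW; rewrite ltn_divLR // mulnC.
  apply: (@dvdz_trans (p0 ^+ (r * (m - i %/ r)) * p0 ^+ i)).
    rewrite -exprD; apply: dvdz_exp2l.
    rewrite mulnBr; have := leq_trunc_div i r; rewrite mulnC => hri.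
    have hb : (r * (i %/ r) <= r * m)%N by rewrite leq_mul2l hq orbT.
    exact: aux_le.
  apply: dvdz_mul; last exact: dvdz_exp2r.
  rewrite exprM -natz natrX natz.
  apply: dvdz_exp2r; rewrite et; exact: dvdz_mull.
rewrite geval; apply: (@dvdz_trans (p0 ^+ i)); last exact: dvdz_exp2r.
by apply: dvdz_exp2l; rewrite leqNgt hi.
Qed.
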